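(* Let $k>1$ and $l>0$ be integers and let $t,t'$ be non-negative integers. Then there exists a positive integer $x$ such that the $k$-adic expansion $xl=\sum_{q=1}^{r}s_{xl,q}k^{w_{xl}(q)}$ (with $1\le s_{xl,q}\le k-1$ and $0\le w_{xl}(1)<w_{xl}(2)<\dots$) has at least two terms, $s_{xl,1}=1$ and $w_{xl}(2)-w_{xl}(1)>t$. Moreover, there exists a positive integer $X$ such that the $k$-adic expansion $Xl=\sum_{q}s_{Xl,q}k^{w_{Xl}(q)}$ has at least two terms, $s_{Xl,1}=1$, $w_{Xl}(2)-w_{Xl}(1)>t'$, and $w_{Xl}(1)=w_{xl}(1)$.
   Context: The $k$-adic expansion of a positive integer $m$ is the unique representation $m=\sum_{q=1}^{r}s_{m,q}k^{w_m(q)}$ with digits $1\le s_{m,q}\le k-1$ and exponents $0\le w_m(1)<w_m(2)<\dots<w_m(r)$. *)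

(* Defs.v *)
From mathcomp Require Import all_boot.
Set Implicit Arguments. Unset Strict Implicit. Unset Printing Implicit Defensive.

(* The exponents are the
   positions of the nonzero base-k digits, in increasing order; the digit
   s_{m,q} is the base-k digit at position w_m(q). *)

Definition kdigit (k m i : nat) : nat := (m %/ k ^ i) %% k.

(* increasing list of exponents [w_m(1); w_m(2); ...; w_m(r)]
   (all nonzero digits of m are at positions <= m when k > 1) *)
Definition kexps (k m : nat) : seq nat :=
  [seq i <- iota 0 m.+1 | kdigit k m i != 0].

Definition kterms (k m : nat) : nat := size (kexps k m).

(* w_m(q), 1-indexed *)
Definition kw (k m q : nat) : nat := nth 0 (kexps k m) q.-1.

Definition ks (k m q : nat) : nat := kdigit k m (kw k m q).

(* Main.v *)
Require Import Defs.
From mathcomp Require Import all_boot zify ring.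

Lemma filter_nil_iota (a : pred nat) m n :
  (forall j, m <= j < m + n -> ~~ a j) -> [seq x <- iota m n | a x] = [::].
Proof.
move=> H; apply/eqP/negPn; rewrite -has_filter; apply/hasPn => j.
rewrite mem_iota => /H //.
Qed.

Lemma kexps_struct k N i J :
  i < J -> kdigit k N i = 1 ->
  (forall j, j < J -> j != i -> kdigit k N j = 0) ->
  (exists j, J <= j <= N /\ kdigit k N j != 0) ->
  [/\ kw k N 1 = i, ks k N 1 = 1, 2 <= kterms k N & J <= kw k N 2].
Proof.
move=> iJ di d0 [j [/andP [Jj jN] dj]].
have JN : J <= N.+1 by lia.
set s := [seq x <- iota J (N.+1 - J) | kdigit k N x != 0].
have E : kexps k N = i :: s.
  rewrite /kexps -(subnKC JN) iotaD filter_cat add0n.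
  have -> : J = i + (1 + (J - i.+1)) by lia.
  rewrite iotaD filter_cat iotaD filter_cat /=.
  rewrite di /= filter_nil_iota; last first.
    move=> x /andP[_ hx]; rewrite d0 //; lia.
  rewrite filter_nil_iota; last first.
    move=> x /andP[hx1 hx2]; rewrite d0 //; lia.
  have e : i + (1 + (J - i.+1)) = J by lia.
  by rewrite /= add0n e.
have sne : 0 < size s.
  rewrite size_filter_gt0; apply/hasP; exists j => //.
  rewrite mem_iota; lia.
have s0 : J <= nth 0 s 0.
  have : nth 0 s 0 \in s by rewrite mem_nth.
  by rewrite mem_filter mem_iota => /andP[_ /andP[]].
rewrite /ks /kw /kterms E /= di; split => //.
Qed.

Lemma digits_N k i P d (hk : 1 < k) (hP : 0 < P) (hd : 0 < d) :
  let N := k ^ i + k ^ (i + P) * d in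
  [/\ kdigit k N i = 1,
      (forall j, j < i + P -> j != i -> kdigit k N j = 0) &
      (exists j, i + P <= j <= N /\ kdigit k N j != 0)].
Proof.
move=> N.
have k0 : 0 < k by lia.
have kp n : 0 < k ^ n by rewrite expn_gt0 k0.
split.
- rewrite /kdigit /N expnD -mulnA divnDr ?dvdn_mulr // divnn kp mulKn //.
  rewrite -(prednK hP) expnS -mulnA /= addnC mulnC modnMDl modn_small //.
- move=> j hj hji; rewrite /kdigit.
  case: (ltnP j i) => hlt.
  + have -> : N = k ^ j * (k * (k ^ (i - j.+1) + k ^ (i - j.+1 + P) * d)).
      rewrite /N; have [a ->] : exists a, i = j + a.+1 by exists (i - j.+1); lia.
      have -> : j + a.+1 - j.+1 = a by lia.
      rewrite !expnD !expnS; ring.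
    by rewrite mulKn // modnMr.
  + have hij : i < j by rewrite ltn_neqAle eq_sym hji.
    have -> : N = k ^ j * (k * k ^ (i + P - j.+1) * d) + k ^ i.
      rewrite /N addnC; have [a ->] : exists a, i + P = j + a.+1 by exists (i + P - j.+1); lia.
      have -> : j + a.+1 - j.+1 = a by lia.
      rewrite !expnD !expnS; ring.
    rewrite mulnC divnMDl // divn_small ?ltn_exp2l // addn0.
    by rewrite -mulnA modnMr.
- have dN : N %/ k ^ (i + P) = d.
    rewrite /N addnC mulnC divnMDl // divn_small ?addn0 // ltn_exp2l //; lia.
  set e := trunc_log k d.
  exists (i + P + e); split.
  + apply/andP; split; first lia.
    apply: leq_trans (ltnW (ltn_expl _ hk)) _.
    rewrite /N expnD; apply: leq_trans (leq_addl _ _).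
    by rewrite leq_mul2l trunc_logP // orbT.
  + rewrite /kdigit expnD divnMA dN.
    have [lo hi] := andP (trunc_log_bounds hk hd).
    have q0 : 0 < d %/ k ^ e by rewrite divn_gt0.
    have q1 : d %/ k ^ e < k by rewrite ltn_divLR // -expnS.
    by rewrite modn_small // -lt0n.
Qed.

Lemma pigeon k l (hl : 0 < l) : exists i p, 0 < p /\ forall m, k ^ (i + p * m) %% l = k ^ i %% l.
Proof.
pose f (n : 'I_l.+1) : 'I_l := Ordinal (ltn_pmod (k ^ n) hl).
have : ~~ injectiveb f.
  apply/negP => /injectiveP inj; have := leq_card f inj.
  by rewrite !card_ord ltnn.
move/injectivePn => [x [y xy fxy]].
have e : k ^ x %% l = k ^ y %% l by move: fxy => /(congr1 val).
clear fxy.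
wlog lt : x y xy e / x < y.
  move=> W; case: (ltngtP x y) => h; first exact: (W x y).
  - by apply: (W y x) => //; rewrite eq_sym.
  - by move/eqP: xy; move: h => /val_inj.
exists x, (y - x); split; first lia.
elim=> [|m IH]; first by rewrite muln0 addn0.
rewrite mulnS addnA [x + _]addnC -addnA expnD -modnMmr IH modnMmr -expnD.
have -> : y - x + x = y by lia.
by [].
Qed.

Lemma one_T k l i p (hk : 1 < k) (hl : 0 < l) (hp : 0 < p)
  (per : forall m, k ^ (i + p * m) %% l = k ^ i %% l) T :
  exists x, [/\ 0 < x, 2 <= kterms k (x * l), ks k (x * l) 1 = 1,
        T < kw k (x * l) 2 - kw k (x * l) 1 & kw k (x * l) 1 = i].
Proof.
set P := p * T.+2.
have PT : T.+2 <= P by rewrite /P leq_pmull.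
have k0 : 0 < k by lia.
have K2 : 4 <= k ^ P.
  apply: leq_trans (leq_pexp2l k0 PT) ; rewrite !expnS.
  have : 0 < k ^ T by rewrite expn_gt0 k0.
  nia.
have hd : 0 < k ^ P - 2 by lia.
have [d1 d0 dj] := @digits_N k i P _ hk (leq_trans (isT : 0 < T.+2) PT) hd.
set N := k ^ i + k ^ (i + P) * (k ^ P - 2).
have ldiv : l %| N.
  have h1 : l %| k ^ (i + P) - k ^ i.
    by rewrite -eqn_mod_dvd ?leq_pexp2l ?leq_addr // per.
  have -> : N = (k ^ (i + P) - k ^ i) * (k ^ P - 1).
    rewrite /N expnD; have : 0 < k ^ i by rewrite expn_gt0 k0.
    move: (k ^ i) (k ^ P) K2 => A B; nia.
  exact: dvdn_mulr.
have [w1 s1 t2 w2] := @kexps_struct k N i (i + P) ltac:(lia) d1 d0 dj.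
exists (N %/ l); rewrite divnK //; split => //.
- rewrite divn_gt0 //; apply: dvdn_leq => //; rewrite /N; have := expn_gt0 k i; lia.
- lia.
Qed.

Theorem lemma3p1 (k l t t' : nat) (hk : 1 < k) (hl : 0 < l) :
  exists x : nat,
    [/\ 0 < x, 2 <= kterms k (x * l), ks k (x * l) 1 = 1,
        t < kw k (x * l) 2 - kw k (x * l) 1 &
        exists X : nat,
          [/\ 0 < X, 2 <= kterms k (X * l), ks k (X * l) 1 = 1,
              t' < kw k (X * l) 2 - kw k (X * l) 1 &
              kw k (X * l) 1 = kw k (x * l) 1]].
Proof.
have [i [p [hp per]]] := @pigeon k l hl.
have [x [x0 x1 x2 x3 x4]] := @one_T k l i p hk hl hp per t.
have [X [X0 X1 X2 X3 X4]] := @one_T k l i p hk hl hp per t'.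
exists x; split => //; exists X; split => //; by rewrite X4 x4.
Qed.
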